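(* For each $a\in I$ let $P_a$ be a bottom set of $(X_a,\prec_a)$, and let $\mathbb{A}=(P,A,\prec)$, with $P=\dot\bigcup_a P_a$, be an alignment of the family $\{(P_a,\prec_a|_{P_a})\}_{a\in I}$ having at least one column. Let $\Xi$ be any column of $\mathbb{A}$ that is maximal with respect to $\prec$ (such a column exists). Then: (1) for each $a\in I$, either $\Xi\cap P_a=\emptyset$ (a gap in row $a$), in which case set $P'_a=P_a$, or $\Xi\cap P_a=\{p_a\}$ with $p_a\in\sup P_a$, in which case set $P'_a=P_a\setminus\{p_a\}$; and $\Xi$ is not entirely gaps, i.e., $\Xi\cap P_a\neq\emptyset$ for some $a$; (2) each $P'_a$ is a bottom set of $(X_a,\prec_a)$, and the restriction $\mathbb{A}'$ of $\mathbb{A}$ to $P\setminus\Xi=\dot\bigcup_a P'_a$ (induced subgraph, with columns the remaining columns of $\mathbb{A}$ and the restricted order) is an alignment of $\{(P'_a,\prec_a|_{P'_a})\}_{a\in I}$, so that $\mathbb{A}$ is obtained from $\mathbb{A}'$ by appending the column $\Xi$; (3) every column $\Upsilon$ of $\mathbb{A}'$ satisfies either $\Upsilon\prec\Xi$ or $\Upsilon$ and $\Xi$ are incomparable.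
   Context: Let $I$ be a finite index set (''rows''), and for each $a\in I$ let $(X_a,\prec_a)$ be a finite set with a strict partial order. A subset $P\subseteq X_a$ is a bottom set if for all $p\in P$ and all $p'\prec_a p$ we have $p'\in P$. For a bottom set $P$, $\sup P$ denotes the set of its maximal elements, i.e., $p\in P$ such that there is no $p'\in P$ with $p\prec_a p'$. Given a family of finite strict posets $(Y_a,\prec_a)$, $a\in I$, with elements written $(a,i)$ and $Y=\dot\bigcup_a Y_a$, and a simple undirected graph $(Y,A)$ with set of connected components (''columns'') $\mathcal{C}(Y,A)$, an alignment of the family is a triple $(Y,A,\prec)$ where $\prec$ is a strict partial order on $\mathcal{C}(Y,A)$ such that: (P1) every column induces a complete subgraph; (P2) if $(a,i)\in Q$ and $(a,j)\in Q$ then $i=j$; (P3) if $(a,i)\in P$, $(a,j)\in Q$ and $(a,i)\prec_a(a,j)$ then $P\prec Q$; (P4) if $P\prec Q$, $(a,i)\in P$ and $(a,j)\in Q$, then $(a,i)\prec_a(a,j)$ or $(a,i)$ and $(a,j)$ are incomparable w.r.t. $\prec_a$. *)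

(* Defs.v *)
From HB Require Import structures.
From mathcomp Require Import all_boot.
Set Implicit Arguments. Unset Strict Implicit. Unset Printing Implicit Defensive.

Section Alignment.
Variables (I : finType) (X : I -> finType).

Definition elt := {a : I & X a}.

Definition strict_po (T : finType) (r : rel T) : Prop :=
  (forall x, ~~ r x x) /\ (forall x y z, r x y -> r y z -> r x z).

Definition bottom_set (a : I) (ord : rel (X a)) (P : {set X a}) : Prop :=
  forall p p', p \in P -> ord p' p -> p' \in P.

Definition supset (a : I) (ord : rel (X a)) (P : {set X a}) : {set X a} :=
  [set p in P | [forall p' in P, ~~ ord p p']].

Definition Pset (Pa : forall a, {set X a}) : {set elt} :=
  [set x : elt | tagged x \in Pa (tag x)].

Definition rowlt (ord : forall a, rel (X a)) (x y : elt) : bool :=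
  (tag x == tag y) && ord (tag x) (tagged x) (tagged_as x y).

Definition comp (S : {set elt}) (A : rel elt) (x : elt) : {set elt} :=
  [set y | connect (fun u v => [&& u \in S, v \in S & A u v]) x y].

Definition columns (S : {set elt}) (A : rel elt) : {set {set elt}} :=
  [set comp S A x | x in S].

Definition is_alignment (ord : forall a, rel (X a)) (S : {set elt})
    (A : rel elt) (prec : rel {set elt}) : Prop :=
  (forall x y, x \in S -> y \in S -> A x y = A y x) /\
  (forall x, x \in S -> ~~ A x x) /\
  (forall C, C \in columns S A -> ~~ prec C C) /\
  (forall C D E, C \in columns S A -> D \in columns S A -> E \in columns S A ->
      prec C D -> prec D E -> prec C E) /\
  (forall C, C \in columns S A -> forall x y, x \in C -> y \in C -> x != y -> A x y) /\
  (* (P2) at most one element per row in a column *)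
  (forall C, C \in columns S A -> forall x y, x \in C -> y \in C ->
      tag x = tag y -> x = y) /\
  (* (P3) *)
  (forall C D, C \in columns S A -> D \in columns S A -> forall x y,
      x \in C -> y \in D -> rowlt ord x y -> prec C D) /\
  (forall C D, C \in columns S A -> D \in columns S A -> prec C D -> forall x y,
      x \in C -> y \in D -> tag x = tag y ->
      rowlt ord x y || (~~ rowlt ord x y && ~~ rowlt ord y x)).

Definition row_part (Xi : {set elt}) (a : I) : {set X a} :=
  [set p : X a | Tagged X p \in Xi].

End Alignment.

(* Main.v *)
Require Import Defs.
From HB Require Import structures.
From mathcomp Require Import all_boot.

Section Helpers.
Variables (I : finType) (X : I -> finType).

Definition er (S : {set elt X}) (A : rel (elt X)) : rel (elt X) :=
  fun u v => [&& u \in S, v \in S & A u v].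

Lemma in_comp (S : {set elt X}) A x y : (y \in Defs.comp S A x) = connect (er S A) x y.
Proof. by rewrite inE. Qed.

Lemma er_sym (S : {set elt X}) A : (forall x y, x \in S -> y \in S -> A x y = A y x) ->
  connect_sym (er S A).
Proof.
move=> HA; apply: sym_connect_sym => u v; rewrite /er.
by case uS: (u \in S); case vS: (v \in S) => //=; rewrite HA.
Qed.

Lemma comp_sub (S : {set elt X}) A x y : x \in S -> y \in Defs.comp S A x -> y \in S.
Proof.
move=> xS; rewrite in_comp => /connectP [p].
case/lastP: p => [|p z] /=; first by move=> _ ->.
by rewrite rcons_path last_rcons => /andP[_ /and3P[_ zS _]] ->.
Qed.

Lemma comp_restrict (S : {set elt X}) A (Xi : {set elt X}) x0 x :
  (forall x y, x \in S -> y \in S -> A x y = A y x) ->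
  Xi = Defs.comp S A x0 -> x \notin Xi ->
  Defs.comp (S :\: Xi) A x = Defs.comp S A x.
Proof.
move=> HA HXi xX; have sym := @er_sym S A HA.
have out : forall u, connect (er S A) x u -> u \notin Xi.
  move=> u cu; apply/negP => uX; move: xX; rewrite HXi in_comp.
  move: uX; rewrite HXi in_comp => c0u.
  by rewrite (connect_trans c0u) // sym.
apply/setP => y; rewrite !in_comp; apply/idP/idP.
  apply: connect_sub => u v /and3P[]; rewrite !inE => /andP[_ uS] /andP[_ vS] Auv.
  by apply: connect1; rewrite /er uS vS Auv.
move=> /connectP [p pth ->]; apply/connectP; exists p => //.
have allp : all (connect (er S A) x) (x :: p).
  by apply/allP => z zin; exact: (path_connect pth zin).
apply: (sub_in_path (P := connect (er S A) x)) allp pth.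
  move=> u v cu cv /and3P[uS vS Auv].
by rewrite /er !inE (out u cu) (out v cv) uS vS Auv.
Qed.

Lemma align_sub (ord : forall a, rel (X a)) (S S' : {set elt X}) A prec :
  is_alignment ord S A prec -> S' \subset S ->
  columns S' A \subset columns S A -> is_alignment ord S' A prec.
Proof.
move=> [H1 [H2 [H3 [H4 [H5 [H6 [H7 H8]]]]]]] /subsetP sS /subsetP sC.
split; first by move=> x y /sS xS /sS yS; apply: H1.
split; first by move=> x /sS; apply: H2.
split; first by move=> C /sC; apply: H3.
split; first by move=> C D E /sC HC /sC HD /sC HE; apply: H4.
split; first by move=> C /sC; apply: H5.
split; first by move=> C /sC; apply: H6.
split; first by move=> C D /sC HC /sC HD; apply: H7.
by move=> C D /sC HC /sC HD; apply: H8.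
Qed.

End Helpers.


Theorem theorem1 (I : finType) (X : I -> finType) (ord : forall a, rel (X a))
  (Hord : forall a, strict_po (ord a))
  (Pa : forall a, {set X a}) (Hbot : forall a, bottom_set (ord a) (Pa a))
  (A : rel (elt X)) (prec : rel {set elt X})
  (Hal : is_alignment ord (Pset Pa) A prec)
  (Hne : columns (Pset Pa) A != set0)
  (Xi : {set elt X}) (HXi : Xi \in columns (Pset Pa) A)
  (Hmax : forall C, C \in columns (Pset Pa) A -> ~~ prec Xi C) :
  let P' := fun a => Pa a :\: row_part Xi a in
  (* (1) *)
  (forall a,
     (row_part Xi a = set0 /\ P' a = Pa a) \/
     (exists p, p \in supset (ord a) (Pa a) /\ row_part Xi a = [set p] /\
                P' a = Pa a :\ p)) /\
  (exists a, row_part Xi a != set0) /\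
  (* (2) *)
  (forall a, bottom_set (ord a) (P' a)) /\
  Pset P' = Pset Pa :\: Xi /\
  columns (Pset P') A = columns (Pset Pa) A :\ Xi /\
  is_alignment ord (Pset P') A prec /\
  (* (3) *)
  (forall U, U \in columns (Pset P') A ->
     prec U Xi || (~~ prec U Xi && ~~ prec Xi U)).
Proof.
cbv zeta.
have Hal' := Hal.
move: Hal' => [H1 [H2 [H3 [H4 [H5 [H6 [H7 H8]]]]]]].
set S := Pset Pa in H1 H2 H3 H4 H5 H6 H7 H8 Hal HXi Hmax Hne *.
have [x0 x0S Xidef] := imsetP HXi.
have XiS : forall y, y \in Xi -> y \in S.
  by move=> y; rewrite Xidef; apply: comp_sub.
have compin : forall y, y \in S -> Defs.comp S A y \in columns S A.
  by move=> y yS; apply: imset_f.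
have self : forall y, y \in Defs.comp S A y by move=> y; rewrite in_comp connect0.
have key : forall a q q', Tagged X q \in Xi -> q' \in Pa a -> ~~ ord a q q'.
  move=> a q q' qX q'P; apply/negP => oq.
  have q'S : Tagged X q' \in S by rewrite inE.
  have := H7 Xi _ HXi (compin _ q'S) (Tagged X q) (Tagged X q') qX (self _).
  by rewrite /rowlt /= eqxx tagged_asE oq (negbTE (Hmax _ (compin _ q'S))) => /(_ isT).
have HP' : Pset (fun a => Pa a :\: row_part Xi a) = S :\: Xi.
  by apply/setP => -[a p]; rewrite !inE.
have Hcol : columns (S :\: Xi) A = columns S A :\ Xi.
  apply/setP => C; apply/imsetP/idP.
    move=> [x]; rewrite inE => /andP[xX xS] ->.
    rewrite (@comp_restrict _ _ _ _ _ _ _ H1 Xidef xX) !inE compin // andbT.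
    by apply/eqP => E; move: xX; rewrite -E self.
  rewrite !inE => /andP[CX /imsetP[x xS Cdef]].
  have xX : x \notin Xi.
    apply/negP => xX; move: CX; rewrite Cdef Xidef; apply/negP; rewrite negbK.
    move: xX; rewrite Xidef in_comp => cx; apply/eqP/setP => y; rewrite !in_comp.
    by rewrite (same_connect (@er_sym _ _ _ _ H1) cx).
  by exists x; [rewrite inE xX | rewrite Cdef (@comp_restrict _ _ _ _ _ _ _ H1 Xidef xX)].
have colsub : columns (S :\: Xi) A \subset columns S A.
  by rewrite Hcol subD1set.
split.
  move=> a; case: (set_0Vmem (row_part Xi a)) => [->|[p pin]].
    by left; rewrite setD0.
  right; exists p.
  have pP : p \in Pa a by move: pin; rewrite inE => /XiS; rewrite inE.
  have rp : row_part Xi a = [set p].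
    apply/setP => q; rewrite [in RHS]inE; apply/idP/eqP => [qin|->//].
    move: qin pin; rewrite !inE => qin pin.
    exact: eq_from_Tagged (H6 Xi HXi _ _ qin pin erefl).
  split.
    rewrite inE pP /=; apply/forallP => p'; apply/implyP => p'P.
    by apply: key => //; move: pin; rewrite inE.
  by rewrite rp.
split.
  exists (tag x0); apply/set0Pn; exists (tagged x0).
  by rewrite inE taggedK Xidef self.
split.
  move=> a p p'; rewrite !inE => /andP[pX pP] op.
  have p'P := Hbot a p p' pP op.
  rewrite p'P andbT; apply/negP => p'X.
  by move: (key a p' p p'X pP); rewrite op.
rewrite HP'.
split=> //.
split=> //.
split.
  apply: align_sub Hal _ colsub.
  by apply/subsetP => x; rewrite inE => /andP[].
move=> U /(subsetP colsub) US.
by case: (prec U Xi) => //=; rewrite Hmax.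
Qed.
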